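(* Let $G$ be a multigraph of even order $n$, let $S \subseteq V(G)$ with $|S|$ odd and $|S| \ge 3$, let $F$ be a 1-factor of $G$, and let $\Delta = \Delta(G)$. Then $$\operatorname{ex}(\langle S\rangle, \Delta-1; G-F) \le \operatorname{ex}(\langle S\rangle, \Delta; G) + \min\{(n-|S|-1)/2,\ (|S|-1)/2\}.$$
   Context: Multigraphs are finite and loopless, multiple edges allowed. For a host multigraph $K$ and $S\subseteq V(K)$ of odd size at least 3, $\langle S\rangle$ denotes the subgraph of $K$ induced by $S$, and $\operatorname{ex}(\langle S\rangle, k; K) = e(\langle S\rangle) - k(|S|-1)/2$ is its $k$-excess computed in $K$ (here $e(\cdot)$ is the number of edges). *)

(* Defs.v *)
From mathcomp Require Import all_boot all_order all_algebra.
Set Implicit Arguments. Unset Strict Implicit. Unset Printing Implicit Defensive.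
Import Order.TTheory GRing.Theory Num.Theory.

(* A finite loopless multigraph on vertex set T is given by its edge
   multiplicity function m : T -> T -> nat (m x y = number of edges xy). *)
Definition multigraph (T : finType) (m : T -> T -> nat) : Prop :=
  (forall x y, m x y = m y x) /\ (forall x, m x x = 0%N).

Definition deg (T : finType) (m : T -> T -> nat) (x : T) : nat :=
  (\sum_(y : T) m x y)%N.

Definition maxdeg (T : finType) (m : T -> T -> nat) : nat :=
  (\max_(x : T) deg m x)%N.

Definition one_factor (T : finType) (G F : T -> T -> nat) : Prop :=
  multigraph F /\ (forall x y, F x y <= G x y)%N /\ (forall x, deg F x = 1%N).

Definition gdel (T : finType) (G F : T -> T -> nat) : T -> T -> nat :=
  fun x y => (G x y - F x y)%N.

(* e(<S>) : number of edges of K with both ends in S (each edge counted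
   twice in the ordered double sum, hence the halving) *)
Definition e_ind (T : finType) (m : T -> T -> nat) (S : {set T}) : nat :=
  (\sum_(x in S) \sum_(y in S) m x y)./2.

Definition excess (T : finType) (m : T -> T -> nat) (S : {set T}) (k : rat) : rat :=
  ((e_ind m S)%:R - k * ((#|S|%:R - 1) / 2))%R.

(* Main.v *)
Require Import Defs.
From mathcomp Require Import all_boot all_order all_algebra.
From mathcomp Require Import zify ring lra.
Import Order.TTheory GRing.Theory Num.Theory.

Lemma sumS_le (T : finType) (S : {set T}) (f : T -> nat) :
  (\sum_(x in S) f x <= \sum_x f x)%N.
Proof. by rewrite [X in (_ <= X)%N](bigID (mem S)) /= leq_addr. Qed.

Theorem mainTheorem4 (T : finType) (G F : T -> T -> nat) (S : {set T}) :
  multigraph G -> ~~ odd #|T| ->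
  odd #|S| -> (3 <= #|S|)%N ->
  one_factor G F ->
  (excess (gdel G F) S ((maxdeg G)%:R - 1)
   <= excess G S (maxdeg G)%:R
      + Num.min ((#|T|%:R - #|S|%:R - 1) / 2) ((#|S|%:R - 1) / 2) :> rat)%R.
Proof.
move=> _ evn _ s3 [[Fsym _] [FG Fdeg]].
set A := (\sum_(x in S) \sum_(y in S) F x y)%N.
set E' := (\sum_(x in S) \sum_(y in S) gdel G F x y)%N.
have HE : (\sum_(x in S) \sum_(y in S) G x y = E' + A)%N.
  rewrite /E' /A -big_split /=; apply: eq_bigr => x _.
  rewrite -big_split /=; apply: eq_bigr => y _.
  by rewrite /gdel subnK.
set B := (\sum_(x in S) \sum_(y in ~: S) F x y)%N.
have HAB : (A + B = #|S|)%N.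
  rewrite /A /B -big_split /= -sum1_card; apply: eq_bigr => x _.
  rewrite -(Fdeg x) /deg [RHS](bigID (mem S)) /=.
  by congr (_ + _)%N; apply: eq_bigl => y; rewrite in_setC.
have HB : (B <= #|~: S|)%N.
  rewrite /B exchange_big /= -sum1_card; apply: leq_sum => y _.
  rewrite -(Fdeg y) /deg; under eq_bigr do rewrite Fsym.
  exact: sumS_le.
have HC := cardsC S.
have h1 := odd_double_half E'.
have h2 := odd_double_half A.
have h3 := odd_double_half (E' + A).
have hT := odd_double_half #|T|.
rewrite (negbTE evn) in hT.
clearbody A B.
have N1 : (E'./2 + A./2 <= (E' + A)./2)%N.
  move: h1 h3; rewrite -!muln2 => h1 h3.
  move: h2; rewrite -!muln2 => h2.
  case: (odd E') h1; case: (odd A) h2; case: (odd (E' + A)) h3; simpl; lia.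
have N2 : (2 * #|S| <= 2 * A./2 + #|T|)%N.
  move: h2; rewrite -!muln2 => h2.
  move: hT; rewrite -!muln2 add0n => hT.
  move: HB HC; set c := #|~: S| => HB HC.
  clear -h2 hT HB HC HAB.
  set sS := #|S| in HAB HC *; set nT := #|T| in hT HC *.
  clearbody c sS nT.
  case: (odd A) h2; simpl => h2; lia.
rewrite /excess /e_ind HE -/E'.
set D := ((maxdeg G)%:R : rat).
move: N1 N2 s3; set e' := E'./2; set a := A./2; set e := (E' + A)./2.
set s := #|S|; set n := #|T|.
move=> N1 N2 s3.
have R1 : (e'%:R + a%:R <= e%:R :> rat)%R by rewrite -natrD ler_nat.
have R2 : (2 * s%:R <= 2 * a%:R + n%:R :> rat)%R.
  by rewrite -[2%R]/((2%:R)%R) -!natrM -natrD ler_nat.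
have R3 : (3 <= s%:R :> rat)%R by rewrite -[3%R]/((3%:R)%R) ler_nat.
clear N1 N2 s3.
have Q : (2 * (e'%:R - e%:R) <= n%:R - 2 * s%:R :> rat)%R by lra.
have Q2 : (e'%:R <= e%:R :> rat)%R.
  by apply: le_trans R1; rewrite lerDl ler0n.
have E1 : forall x y : rat, (x - (D - 1) * y = x - D * y + y)%R by move=> x y; ring.
have K1 : (e'%:R - (D - 1) * ((s%:R - 1) / 2) <=
   e%:R - D * ((s%:R - 1) / 2) + (n%:R - s%:R - 1) / 2 :> rat)%R.
  rewrite E1; lra.
have K2 : (e'%:R - (D - 1) * ((s%:R - 1) / 2) <=
   e%:R - D * ((s%:R - 1) / 2) + (s%:R - 1) / 2 :> rat)%R.
  rewrite E1; lra.
rewrite /Num.min /Order.min; case: ifP => _; [exact: K1 | exact: K2].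
Qed.
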